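(* Let $\mathcal{R}^*=\{z\in\mathbb{C}: z\ne n\pi i,\ n\in\mathbb{Z}\}$. There exist real-valued functions $C_1(x,y,t),C_2(t),C_3(t)\ge0$ ($x,y\in\mathbb{R}$, $t\in\mathcal{R}^*$), bounded on compact subsets of $\mathcal{R}^*$, such that for every $\lambda\in\mathbb{Z}_{\ge1}$ and $t\in\mathcal{R}^*$, \[ |\theta_\lambda(x,y,\boldsymbol\mu_\lambda,t)|\le\Big|\frac{\sqrt2 g}{1-e^{-2t}}\Big|C_1(x,y,t),\quad |\psi^\pm_\lambda(\boldsymbol\mu_\lambda,t)|\le\Big|\frac{2g^2}{1-e^{-2t}}\Big|C_2(t),\quad |\xi_\lambda(\boldsymbol\mu_\lambda,t)|\le\Big|\frac{2g^2}{1-e^{-2t}}\Big|C_3(t)\,\lambda, \] uniformly for $0\le\mu_1\le\mu_2\le\cdots\le\mu_\lambda\le1$.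
   Context: $g\in\mathbb{R}$ is fixed. For $\boldsymbol\mu_\lambda=(\mu_1,\dots,\mu_\lambda)$ and with the convention $\mu_0=0$: \[ \theta_\lambda(x,y,\boldsymbol\mu_\lambda,t)=\frac{2\sqrt2 g}{\sinh t}(x\cosh t-y)\frac{1-(-1)^\lambda}2-\sqrt2 g(x-y)\coth(\tfrac t2)+\frac{2\sqrt2 g(-1)^\lambda}{\sinh t}\sum_{\gamma=0}^\lambda(-1)^\gamma\big[x\cosh(t(1-\mu_\gamma))-y\cosh(t\mu_\gamma)\big], \] \[ \xi_\lambda(\boldsymbol\mu_\lambda,t)=-\frac{8g^2}{\sinh t}\sinh^2\!\big(\tfrac12t(1-\mu_\lambda)\big)(-1)^\lambda\sum_{\gamma=0}^\lambda(-1)^\gamma\cosh(t\mu_\gamma)-\frac{4g^2}{\sinh t}\sum_{\substack{0\le\alpha<\beta\le\lambda-1\\\beta-\alpha\ \mathrm{odd}}}\big(\cosh(t(\mu_{\beta+1}-1))-\cosh(t(\mu_\beta-1))\big)\big(\cosh(t\mu_\alpha)-\cosh(t\mu_{\alpha+1})\big), \] \[ \psi^-_\lambda(\boldsymbol\mu_\lambda,t)=\frac{4g^2}{\sinh t}\Big[\sum_{\gamma=0}^\lambda(-1)^\gamma\sinh\big(t(\tfrac12-\mu_\gamma)\big)\Big]^2,\qquad \psi^+_\lambda(\boldsymbol\mu_\lambda,t)=\frac{4g^2}{\sinh t}\Big[\sum_{\gamma=0}^\lambda(-1)^\gamma\cosh\big(t(\tfrac12-\mu_\gamma)\big)\Big]^2.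 \] *)

(* Defs.v *)
From Stdlib Require Import Reals List.
From Coquelicot Require Import Coquelicot.
Open Scope R_scope.

Definition cexp (z : C) : C :=
  (exp (Re z) * cos (Im z), exp (Re z) * sin (Im z)).
Definition csinh (z : C) : C := ((cexp z - cexp (- z)) / RtoC 2)%C.
Definition ccosh (z : C) : C := ((cexp z + cexp (- z)) / RtoC 2)%C.
Definition ccoth (z : C) : C := (ccosh z / csinh z)%C.

Definition Rstar (z : C) : Prop := forall n : Z, z <> (0, IZR n * PI).

Definition compactC (K : C -> Prop) : Prop :=
  forall (I : Type) (U : I -> C -> Prop),
    (forall i, open (U i)) ->
    (forall z, K z -> exists i, U i z) ->
    exists l : list I, forall z, K z -> exists i, In i l /\ U i z.

Definition muz (mu : nat -> R) (g : nat) : R :=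
  match g with O => 0 | S _ => mu g end.

Definition sgn (k : nat) : C := RtoC ((-1) ^ k).

Definition theta (g : R) (lam : nat) (x y : R) (mu : nat -> R) (t : C) : C :=
  (RtoC (2 * sqrt 2 * g) / csinh t * (RtoC x * ccosh t - RtoC y)
     * RtoC ((1 - (-1) ^ lam) / 2)
   - RtoC (sqrt 2 * g * (x - y)) * ccoth (t / RtoC 2)
   + RtoC (2 * sqrt 2 * g) * sgn lam / csinh t
     * sum_n (fun k => sgn k *
          (RtoC x * ccosh (t * RtoC (1 - muz mu k))
           - RtoC y * ccosh (t * RtoC (muz mu k)))) lam)%C.

Definition xi (g : R) (lam : nat) (mu : nat -> R) (t : C) : C :=
  (- (RtoC (8 * g ^ 2) / csinh t)
     * csinh (RtoC (1/2) * t * RtoC (1 - muz mu lam)) * csinh (RtoC (1/2) * t * RtoC (1 - muz mu lam)) * sgn lam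
     * sum_n (fun k => sgn k * ccosh (t * RtoC (muz mu k))) lam
   - RtoC (4 * g ^ 2) / csinh t
     * sum_n (fun b => sum_n (fun a =>
          if (Nat.ltb a b && Nat.odd (b - a))%bool then
            (ccosh (t * RtoC (muz mu (S b) - 1)) - ccosh (t * RtoC (muz mu b - 1)))
            * (ccosh (t * RtoC (muz mu a)) - ccosh (t * RtoC (muz mu (S a))))
          else RtoC 0) (lam - 1)) (lam - 1))%C.

Definition psi_minus (g : R) (lam : nat) (mu : nat -> R) (t : C) : C :=
  (RtoC (4 * g ^ 2) / csinh t
   * (sum_n (fun k => sgn k * csinh (t * RtoC (1/2 - muz mu k))) lam)
   * (sum_n (fun k => sgn k * csinh (t * RtoC (1/2 - muz mu k))) lam))%C.

Definition psi_plus (g : R) (lam : nat) (mu : nat -> R) (t : C) : C :=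
  (RtoC (4 * g ^ 2) / csinh t
   * (sum_n (fun k => sgn k * ccosh (t * RtoC (1/2 - muz mu k))) lam)
   * (sum_n (fun k => sgn k * ccosh (t * RtoC (1/2 - muz mu k))) lam))%C.

Definition admissible (lam : nat) (mu : nat -> R) : Prop :=
  (forall k, (1 <= k <= lam)%nat -> 0 <= mu k <= 1) /\
  (forall k, (1 <= k < lam)%nat -> mu k <= mu (S k)).

(* Main.v *)
Require Import Defs.
From Stdlib Require Import Reals List.
From Coquelicot Require Import Coquelicot.
From Stdlib Require Import Lra Lia Psatz.
Open Scope R_scope.

Lemma exp_mono x y : x <= y -> exp x <= exp y.
Proof. intros [H|H]; [left; apply exp_increasing; auto| subst; lra]. Qed.

Lemma cexp_add z w : cexp (z + w)%C = (cexp z * cexp w)%C.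
Proof.
  destruct z as [a b], w as [c d]. unfold cexp, Cmult, Cplus; simpl.
  rewrite exp_plus, cos_plus, sin_plus. f_equal; ring.
Qed.

Lemma cexp_0 : cexp 0%C = 1%C.
Proof. unfold cexp; simpl. rewrite exp_0, cos_0, sin_0. unfold RtoC. f_equal; ring. Qed.

Lemma Cmod_cexp z : Cmod (cexp z) = exp (fst z).
Proof.
  destruct z as [a b]. unfold Cmod, cexp, Re, Im; cbn [fst snd].
  replace ((exp a * cos b) ^ 2 + (exp a * sin b) ^ 2) with (Rsqr (exp a)).
  - apply sqrt_Rsqr. left; apply exp_pos.
  - pose proof (sin2_cos2 b). unfold Rsqr in *. nra.
Qed.

Lemma cexp_neq0 z : cexp z <> 0%C.
Proof. intro H. pose proof (Cmod_cexp z). rewrite H, Cmod_0 in H0. pose proof (exp_pos (fst z)). lra. Qed.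

Lemma Cmod_div2 p : Cmod (p / RtoC 2) = Cmod p / 2.
Proof. rewrite Cmod_div. rewrite Cmod_R, Rabs_pos_eq; lra. intro H. injection H. lra. Qed.

Lemma Cmod_sub_le a b : Cmod (a - b) <= Cmod a + Cmod b.
Proof. unfold Cminus. eapply Rle_trans. apply Cmod_triangle. rewrite Cmod_opp. lra. Qed.

Lemma cexp_bd z A : Rabs (fst z) <= A -> Cmod (cexp z) <= exp A.
Proof. intro H. rewrite Cmod_cexp. apply exp_mono. pose proof (Rle_abs (fst z)). lra. Qed.

Lemma ccosh_bd z A : Rabs (fst z) <= A -> Cmod (ccosh z) <= exp A.
Proof.
  intro H. unfold ccosh. rewrite Cmod_div2.
  assert (Rabs (fst (-z)%C) <= A) by (destruct z; simpl; rewrite Rabs_Ropp; auto).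
  pose proof (cexp_bd _ _ H). pose proof (cexp_bd _ _ H0).
  pose proof (Cmod_triangle (cexp z) (cexp (-z))). lra.
Qed.

Lemma csinh_bd z A : Rabs (fst z) <= A -> Cmod (csinh z) <= exp A.
Proof.
  intro H. unfold csinh. rewrite Cmod_div2.
  assert (Rabs (fst (-z)%C) <= A) by (destruct z; simpl; rewrite Rabs_Ropp; auto).
  pose proof (cexp_bd _ _ H). pose proof (cexp_bd _ _ H0).
  pose proof (Cmod_sub_le (cexp z) (cexp (-z))). lra.
Qed.

Lemma Cmod_le_sum z : Cmod z <= Rabs (fst z) + Rabs (snd z).
Proof.
  destruct z as [x y]. unfold Cmod; simpl.
  rewrite <- (sqrt_Rsqr (Rabs x + Rabs y)).
  - apply sqrt_le_1_alt. unfold Rsqr. pose proof (Rabs_pos x). pose proof (Rabs_pos y).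
    assert (x^2 = Rabs x * Rabs x) by (simpl; rewrite Rmult_1_r, <- Rabs_mult; symmetry; apply Rabs_pos_eq; nra).
    assert (y^2 = Rabs y * Rabs y) by (simpl; rewrite Rmult_1_r, <- Rabs_mult; symmetry; apply Rabs_pos_eq; nra).
    nra.
  - pose proof (Rabs_pos x). pose proof (Rabs_pos y). lra.
Qed.

Lemma lip_real (h h' : R -> R) K u v :
  -1 <= u <= 1 -> -1 <= v <= 1 ->
  (forall c, -1 <= c <= 1 -> derivable_pt_lim h c (h' c)) ->
  (forall c, -1 <= c <= 1 -> Rabs (h' c) <= K) ->
  Rabs (h u - h v) <= K * Rabs (u - v).
Proof.
  intros Hu Hv Hd Hb.
  assert (K0 : 0 <= K) by (specialize (Hb 0 ltac:(lra)); pose proof (Rabs_pos (h' 0)); lra).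
  destruct (Rtotal_order u v) as [Hl|[He|Hg]].
  - destruct (MVT_cor2 h h' u v Hl (fun c Hc => Hd c ltac:(lra))) as [c [Hc1 Hc2]].
    rewrite <- Rabs_Ropp. replace (- (h u - h v)) with (h v - h u) by ring. rewrite Hc1.
    rewrite Rabs_mult. rewrite <- (Rabs_Ropp (u - v)). replace (- (u - v)) with (v - u) by ring.
    apply Rmult_le_compat_r. apply Rabs_pos. apply Hb. lra.
  - subst. replace (h v - h v) with 0 by ring. replace (v - v) with 0 by ring. rewrite Rabs_R0. lra.
  - destruct (MVT_cor2 h h' v u Hg (fun c Hc => Hd c ltac:(lra))) as [c [Hc1 Hc2]].
    rewrite Hc1. rewrite Rabs_mult. apply Rmult_le_compat_r. apply Rabs_pos. apply Hb. lra.
Qed.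

Definition Lam (t : C) := 2 * (1 + Rabs (fst t) + Rabs (snd t)) * exp (Rabs (fst t)).

Lemma Lam_ge t : 2 <= Lam t /\ exp (Rabs (fst t)) <= Lam t.
Proof.
  unfold Lam. pose proof (Rabs_pos (fst t)). pose proof (Rabs_pos (snd t)).
  pose proof (exp_ineq1_le (Rabs (fst t))). split; nra.
Qed.

Lemma cexp_ts a b s : cexp ((a, b) * RtoC s)%C = (exp (a * s) * cos (b * s), exp (a * s) * sin (b * s)).
Proof.
  unfold cexp, Cmult, RtoC; simpl.
  replace (a * s - b * 0) with (a * s) by ring. replace (a * 0 + b * s) with (b * s) by ring. auto.
Qed.

Lemma comp_bound a b c : -1 <= c <= 1 ->
  Rabs (a * exp (a * c) * cos (b * c) - b * exp (a * c) * sin (b * c)) <= (Rabs a + Rabs b) * exp (Rabs a)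
  /\ Rabs (a * exp (a * c) * sin (b * c) + b * exp (a * c) * cos (b * c)) <= (Rabs a + Rabs b) * exp (Rabs a).
Proof.
  intro Hc.
  assert (He : exp (a * c) <= exp (Rabs a)).
  { apply exp_mono. assert (Rabs (a * c) <= Rabs a).
    { rewrite Rabs_mult. pose proof (Rabs_pos a). assert (Rabs c <= 1) by (apply Rabs_le; lra). nra. }
    pose proof (Rle_abs (a*c)). lra. }
  pose proof (exp_pos (a * c)).
  assert (Rabs (cos (b*c)) <= 1) by (apply Rabs_le; apply COS_bound).
  assert (Rabs (sin (b*c)) <= 1) by (apply Rabs_le; apply SIN_bound).
  pose proof (Rabs_pos a). pose proof (Rabs_pos b).
  pose proof (Rabs_pos (cos (b*c))). pose proof (Rabs_pos (sin (b*c))).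
  assert (Hx : Rabs (exp (a*c)) = exp (a*c)) by (apply Rabs_pos_eq; lra).
  split.
  - unfold Rminus. eapply Rle_trans. apply Rabs_triang. rewrite Rabs_Ropp, !Rabs_mult, Hx.
    assert (Rabs a * exp (a*c) * Rabs (cos (b*c)) <= Rabs a * exp (Rabs a)).
    { apply Rle_trans with (Rabs a * exp (a*c) * 1). apply Rmult_le_compat_l; nra. nra. }
    assert (Rabs b * exp (a*c) * Rabs (sin (b*c)) <= Rabs b * exp (Rabs a)).
    { apply Rle_trans with (Rabs b * exp (a*c) * 1). apply Rmult_le_compat_l; nra. nra. }
    lra.
  - eapply Rle_trans. apply Rabs_triang. rewrite !Rabs_mult, Hx.
    assert (Rabs a * exp (a*c) * Rabs (sin (b*c)) <= Rabs a * exp (Rabs a)).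
    { apply Rle_trans with (Rabs a * exp (a*c) * 1). apply Rmult_le_compat_l; nra. nra. }
    assert (Rabs b * exp (a*c) * Rabs (cos (b*c)) <= Rabs b * exp (Rabs a)).
    { apply Rle_trans with (Rabs b * exp (a*c) * 1). apply Rmult_le_compat_l; nra. nra. }
    lra.
Qed.

Lemma cexp_lip t s s' : -1 <= s <= 1 -> -1 <= s' <= 1 ->
  Cmod (cexp (t * RtoC s) - cexp (t * RtoC s'))%C <= Lam t * Rabs (s - s').
Proof.
  intros Hs Hs'. destruct t as [a b]. rewrite !cexp_ts.
  eapply Rle_trans. apply Cmod_le_sum. simpl.
  set (K := (Rabs a + Rabs b) * exp (Rabs a)).
  assert (H1 : Rabs (exp (a * s) * cos (b * s) + - (exp (a * s') * cos (b * s'))) <= K * Rabs (s - s')).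
  { apply (lip_real (fun s => exp (a * s) * cos (b * s))
       (fun c => a * exp (a * c) * cos (b * c) - b * exp (a * c) * sin (b * c))); auto.
    - intros c Hc. apply is_derive_Reals. auto_derive; auto. ring.
    - intros c Hc. apply comp_bound; auto. }
  assert (H2 : Rabs (exp (a * s) * sin (b * s) + - (exp (a * s') * sin (b * s'))) <= K * Rabs (s - s')).
  { apply (lip_real (fun s => exp (a * s) * sin (b * s))
       (fun c => a * exp (a * c) * sin (b * c) + b * exp (a * c) * cos (b * c))); auto.
    - intros c Hc. apply is_derive_Reals. auto_derive; auto. ring.
    - intros c Hc. apply comp_bound; auto. }
  unfold Lam; simpl. pose proof (Rabs_pos (s - s')). pose proof (Rabs_pos a). pose proof (Rabs_pos b).
  pose proof (exp_pos (Rabs a)). unfold K in *. nra.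
Qed.

Lemma neg_ts t s : (- (t * RtoC s))%C = (t * RtoC (- s))%C.
Proof. destruct t. unfold Cmult, Copp, RtoC; simpl. f_equal; ring. Qed.

Lemma ccosh_lip t s s' : -1 <= s <= 1 -> -1 <= s' <= 1 ->
  Cmod (ccosh (t * RtoC s) - ccosh (t * RtoC s'))%C <= Lam t * Rabs (s - s').
Proof.
  intros Hs Hs'. unfold ccosh. rewrite !neg_ts.
  replace ((cexp (t * s) + cexp (t * RtoC (- s))) / 2 - (cexp (t * s') + cexp (t * RtoC (- s'))) / 2)%C
    with (((cexp (t * s) - cexp (t * s')) + (cexp (t * RtoC (- s)) - cexp (t * RtoC (- s')))) / 2)%C by (field).
  rewrite Cmod_div2. eapply Rle_trans. apply Rmult_le_compat_r. lra. apply Cmod_triangle.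
  pose proof (cexp_lip t s s' Hs Hs'). pose proof (cexp_lip t (-s) (-s') ltac:(lra) ltac:(lra)).
  replace (- s - - s') with (- (s - s')) in H0 by ring. rewrite Rabs_Ropp in H0. lra.
Qed.

Lemma csinh_lip t s s' : -1 <= s <= 1 -> -1 <= s' <= 1 ->
  Cmod (csinh (t * RtoC s) - csinh (t * RtoC s'))%C <= Lam t * Rabs (s - s').
Proof.
  intros Hs Hs'. unfold csinh. rewrite !neg_ts.
  replace ((cexp (t * s) - cexp (t * RtoC (- s))) / 2 - (cexp (t * s') - cexp (t * RtoC (- s'))) / 2)%C
    with (((cexp (t * s) - cexp (t * s')) - (cexp (t * RtoC (- s)) - cexp (t * RtoC (- s')))) / 2)%C by (field).
  rewrite Cmod_div2. eapply Rle_trans. apply Rmult_le_compat_r. lra. apply Cmod_sub_le.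
  pose proof (cexp_lip t s s' Hs Hs'). pose proof (cexp_lip t (-s) (-s') ltac:(lra) ltac:(lra)).
  replace (- s - - s') with (- (s - s')) in H0 by ring. rewrite Rabs_Ropp in H0. lra.
Qed.

Lemma fst_ts t s : -1 <= s <= 1 -> Rabs (fst (t * RtoC s)%C) <= Rabs (fst t).
Proof.
  intro Hs. destruct t as [a b]; simpl. replace (a * s - b * 0) with (a * s) by ring.
  rewrite Rabs_mult. pose proof (Rabs_pos a). assert (Rabs s <= 1) by (apply Rabs_le; lra). nra.
Qed.

Lemma ccosh_bdL t s : -1 <= s <= 1 -> Cmod (ccosh (t * RtoC s)) <= Lam t.
Proof. intro. eapply Rle_trans. apply ccosh_bd. apply fst_ts; auto. apply Lam_ge. Qed.
Lemma csinh_bdL t s : -1 <= s <= 1 -> Cmod (csinh (t * RtoC s)) <= Lam t.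
Proof. intro. eapply Rle_trans. apply csinh_bd. apply fst_ts; auto. apply Lam_ge. Qed.
Lemma cexp_bdL t s : -1 <= s <= 1 -> Cmod (cexp (t * RtoC s)) <= Lam t.
Proof. intro. eapply Rle_trans. apply cexp_bd. apply fst_ts; auto. apply Lam_ge. Qed.

Lemma sgn_S k : sgn (S k) = (- sgn k)%C.
Proof. unfold sgn, RtoC, Copp; simpl. f_equal; ring. Qed.
Lemma Cmod_sgn k : Cmod (sgn k) = 1.
Proof. unfold sgn. rewrite Cmod_R. apply pow_1_abs. Qed.
Lemma sgn_0 : sgn 0 = 1%C.
Proof. reflexivity. Qed.

Lemma alt_bd (F : nat -> C) (nu : nat -> R) K n :
  (forall k, (k <= n)%nat -> Cmod (F k) <= K) ->
  (forall k, (k < n)%nat -> Cmod (F (S k) - F k)%C <= K * (nu (S k) - nu k)) ->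
  (forall k, (k < n)%nat -> nu k <= nu (S k)) ->
  Cmod (sum_n (fun k => sgn k * F k)%C n) <= K + K * (nu n - nu 0%nat).
Proof.
  intros HF HL Hm.
  assert (K0 : 0 <= K) by (pose proof (HF 0%nat ltac:(lia)); pose proof (Cmod_ge_0 (F 0%nat)); lra).
  assert (Hmon : forall m, (m <= n)%nat -> nu 0%nat <= nu m).
  { induction m; intros. lra. pose proof (Hm m ltac:(lia)). pose proof (IHm ltac:(lia)). lra. }
  assert (forall m, (m <= n)%nat ->
    Cmod (sum_n (fun k => sgn k * F k)%C m) <= K + K * (nu m - nu 0%nat) /\
    ((S m <= n)%nat -> Cmod (sum_n (fun k => sgn k * F k)%C (S m)) <= K + K * (nu (S m) - nu 0%nat))).
  { induction m; intros Hmn.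
    - split.
      + rewrite sum_O, sgn_0, Cmult_1_l. pose proof (HF 0%nat ltac:(lia)). lra.
      + intro H1. rewrite sum_Sn, sum_O, sgn_S, sgn_0. repeat change (plus ?a ?b) with (a + b)%C.
        replace (1 * F 0%nat + - (1) * F 1%nat)%C with (- (F 1%nat - F 0%nat))%C by ring.
        rewrite Cmod_opp. pose proof (HL 0%nat ltac:(lia)). pose proof (Hm 0%nat ltac:(lia)). nra.
    - destruct (IHm ltac:(lia)) as [H1 H2]. split.
      + apply H2. lia.
      + intro H3. rewrite sum_Sn, sum_Sn, !sgn_S. repeat change (plus ?a ?b) with (a + b)%C.
        replace (sum_n (fun k : nat => sgn k * F k) m + - sgn m * F (S m) + - - sgn m * F (S (S m)))%C
          with (sum_n (fun k : nat => sgn k * F k) m + sgn m * (F (S (S m)) - F (S m)))%C by ring.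
        eapply Rle_trans. apply Cmod_triangle. rewrite Cmod_mult, Cmod_sgn, Rmult_1_l.
        pose proof (HL (S m) ltac:(lia)). pose proof (Hm m ltac:(lia)). nra. }
  apply H; lia.
Qed.

Lemma sum_const_bd (F : nat -> C) c n :
  (forall k, (k <= n)%nat -> Cmod (F k) <= c) -> Cmod (sum_n F n) <= INR (S n) * c.
Proof.
  intros H. induction n.
  - rewrite sum_O. simpl. rewrite Rmult_1_l. apply H; lia.
  - rewrite sum_Sn. repeat change (plus ?a ?b) with (a + b)%C. eapply Rle_trans. apply Cmod_triangle.
    rewrite S_INR. pose proof (IHn ltac:(intros; apply H; lia)). pose proof (H (S n) ltac:(lia)). lra.
Qed.

Lemma sum_tele_bd (F : nat -> C) (nu : nat -> R) c n :
  (forall k, (k <= n)%nat -> Cmod (F k) <= c * (nu (S k) - nu k)) ->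
  Cmod (sum_n F n) <= c * (nu (S n) - nu 0%nat).
Proof.
  intros H. induction n.
  - rewrite sum_O. apply H; lia.
  - rewrite sum_Sn. repeat change (plus ?a ?b) with (a + b)%C. eapply Rle_trans. apply Cmod_triangle.
    pose proof (IHn ltac:(intros; apply H; lia)). pose proof (H (S n) ltac:(lia)). lra.
Qed.

Lemma cexp_neg_pm1 t : Rstar t -> cexp (- t)%C <> 1%C /\ cexp (- t)%C <> (- (1))%C.
Proof.
  intro Hs. destruct t as [a b].
  assert (key : forall e, cexp (- (a, b))%C = (e, 0) -> e * e = 1 -> False).
  { intros e He He2. unfold cexp, Re, Im in He. cbn [fst snd Copp] in He. simpl in He.
    injection He as E1 E2.
    pose proof (exp_pos (-a)).
    assert (sin (-b) = 0). { apply Rmult_integral in E2. destruct E2; lra. }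
    destruct (sin_eq_0_0 _ H0) as [k Hk].
    pose proof (sin2_cos2 (-b)). rewrite H0 in H1. unfold Rsqr in H1.
    assert (exp (-a) * exp (-a) = 1) by nra.
    assert (exp (-a) = 1) by nra. rewrite <- exp_0 in H3. apply exp_inv in H3.
    apply (Hs (- k)%Z). rewrite opp_IZR. f_equal; lra. }
  split; intro H.
  - apply (key 1). rewrite H. reflexivity. ring.
  - apply (key (-1)). rewrite H. unfold Copp, RtoC; simpl. f_equal; ring. ring.
Qed.

Lemma Cmult_neq0 (a b : C) : a <> 0%C -> b <> 0%C -> (a * b)%C <> 0%C.
Proof.
  intros Ha Hb H. assert (0 < Cmod a) by (apply Cmod_gt_0; exact Ha). assert (0 < Cmod b) by (apply Cmod_gt_0; exact Hb).
  pose proof (Cmod_mult a b) as HM. rewrite H, Cmod_0 in HM. nra.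
Qed.

Lemma sub_neq0 (a b : C) : a <> b -> (a - b)%C <> 0%C.
Proof. intros H H1. apply H. replace a with ((a - b) + b)%C by ring. rewrite H1. ring. Qed.

Lemma key_facts t : Rstar t ->
  let Ei := cexp (- t)%C in let Hi := cexp (- (t / RtoC 2))%C in
  Hi <> 0%C /\ (1 - Hi * Hi)%C <> 0%C /\ (1 + Hi * Hi)%C <> 0%C /\
  Ei = (Hi * Hi)%C /\ cexp t = (/ (Hi * Hi))%C /\ cexp (t / RtoC 2) = (/ Hi)%C /\
  cexp (- (RtoC 2 * t))%C = (Hi * Hi * (Hi * Hi))%C.
Proof.
  intros Hs Ei Hi. destruct (cexp_neg_pm1 t Hs) as [N1 N2].
  assert (HHi : Hi <> 0%C) by apply cexp_neq0.
  assert (EH : Ei = (Hi * Hi)%C).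
  { unfold Ei, Hi. rewrite <- cexp_add. f_equal. field. }
  assert (EE : (cexp t * Ei)%C = 1%C).
  { unfold Ei. rewrite <- cexp_add, <- cexp_0. f_equal. ring. }
  assert (HH : (cexp (t / RtoC 2) * Hi)%C = 1%C).
  { unfold Hi. rewrite <- cexp_add, <- cexp_0. f_equal. ring. }
  repeat split; auto.
  - rewrite <- EH. apply sub_neq0. auto.
  - rewrite <- EH. intro H. apply N2. fold Ei. replace Ei with ((1 + Ei) - 1)%C by ring. rewrite H. ring.
  - rewrite <- EH. replace (cexp t) with (cexp t * Ei * / Ei)%C. rewrite EE. field. apply cexp_neq0.
    field. apply cexp_neq0.
  - replace (cexp (t / RtoC 2)) with (cexp (t / RtoC 2) * Hi * / Hi)%C. rewrite HH. field. auto.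
    field. auto.
  - rewrite <- EH. unfold Ei. rewrite <- cexp_add. f_equal. ring.
Qed.

Lemma inv_sinh t k : Rstar t ->
  (k / csinh t)%C = (k / (1 - cexp (- (RtoC 2 * t))) * (RtoC 2 * cexp (- t)))%C.
Proof.
  intro Hs. destruct (key_facts t Hs) as (H1 & H2 & H3 & H4 & H5 & H6 & H7).
  unfold csinh. rewrite H4, H5, H7. field. split; [|auto].
  set (h := cexp (- (t / RtoC 2))%C) in *. cbv beta. intro HH. apply (Cmult_neq0 _ _ H2 H3). rewrite <- HH. ring.
Qed.

Lemma coth_half t : Rstar t ->
  ccoth (t / RtoC 2) = (1 / (1 - cexp (- (RtoC 2 * t))) * (RtoC 2 * cexp (- (t / RtoC 2)) * (1 + cexp (- t)) * ccosh (t / RtoC 2)))%C.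
Proof.
  intro Hs. destruct (key_facts t Hs) as (H1 & H2 & H3 & H4 & H5 & H6 & H7).
  unfold ccoth. unfold csinh at 1. rewrite H4, H6, H7. field.
  set (h := cexp (- (t / RtoC 2))%C) in *. cbv beta. split; [|split; [auto|]].
  - intro HH. apply (Cmult_neq0 _ _ H2 H3). rewrite <- HH. ring.
  - exact H2.
Qed.


Lemma Cm_mul (a b : C) A B0 : Cmod a <= A -> Cmod b <= B0 -> Cmod (a * b)%C <= A * B0.
Proof. intros. rewrite Cmod_mult. pose proof (Cmod_ge_0 a). pose proof (Cmod_ge_0 b). nra. Qed.
Lemma Cm_add (a b : C) A B0 : Cmod a <= A -> Cmod b <= B0 -> Cmod (a + b)%C <= A + B0.
Proof. intros. pose proof (Cmod_triangle a b). lra. Qed.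
Lemma Cm_sub (a b : C) A B0 : Cmod a <= A -> Cmod b <= B0 -> Cmod (a - b)%C <= A + B0.
Proof. intros. pose proof (Cmod_sub_le a b). lra. Qed.
Lemma Cm_opp (a : C) A : Cmod a <= A -> Cmod (- a)%C <= A.
Proof. intros. rewrite Cmod_opp. auto. Qed.

Ltac bnd := first [eassumption | bnd0]
with bnd0 := lazymatch goal with
 | |- Cmod (?a - ?b)%C <= _ => eapply Cm_sub; [bnd|bnd]
 | |- Cmod (?a + ?b)%C <= _ => eapply Cm_add; [bnd|bnd]
 | |- Cmod (- ?a)%C <= _ => eapply Cm_opp; bnd
 | |- Cmod (?a * ?b)%C <= _ => eapply Cm_mul; [bnd|bnd]
 | |- Cmod ?a <= _ => first [eassumption | apply Rle_refl]
end.

Lemma muz_rng lam mu : admissible lam mu -> forall k, (k <= lam)%nat -> 0 <= muz mu k <= 1.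
Proof. intros [H1 H2] k Hk. destruct k. simpl; lra. apply H1; lia. Qed.
Lemma muz_mon lam mu : (1 <= lam)%nat -> admissible lam mu -> forall k, (k < lam)%nat -> muz mu k <= muz mu (S k).
Proof.
  intros Hl [H1 H2] k Hk. destruct k. simpl. pose proof (H1 1%nat ltac:(lia)). lra.
  apply H2; lia.
Qed.

Lemma CmodR x : Cmod (RtoC x) <= Rabs x.
Proof. rewrite Cmod_R. lra. Qed.

Lemma half_eq t : (t / RtoC 2)%C = (t * RtoC (1/2))%C.
Proof. destruct t. unfold Cdiv, Cmult, Cinv, RtoC; simpl. f_equal; field. Qed.

Lemma Cmod_Ei t : Cmod (cexp (- t)%C) <= Lam t.
Proof. replace (- t)%C with (t * RtoC (-1))%C. apply cexp_bdL; lra.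
  destruct t. unfold Cmult, Copp, RtoC; simpl. f_equal; ring. Qed.

Lemma Cmod_Hi t : Cmod (cexp (- (t / RtoC 2))%C) <= Lam t.
Proof. rewrite half_eq, neg_ts. apply cexp_bdL; lra. Qed.

Lemma Dneq t : Rstar t -> (1 - cexp (- (RtoC 2 * t)))%C <> 0%C.
Proof.
  intro Hs. destruct (key_facts t Hs) as (H1 & H2 & H3 & H4 & H5 & H6 & H7).
  rewrite H7. intro HH. apply (Cmult_neq0 _ _ H2 H3). rewrite <- HH. ring.
Qed.

Lemma theta_bd g lam x y mu t : (1 <= lam)%nat -> Rstar t -> admissible lam mu ->
  Cmod (theta g lam x y mu t) <=
  Cmod (RtoC (sqrt 2 * g) / (RtoC 1 - cexp (- (RtoC 2 * t))))%C * ((Rabs x + Rabs y) * (20 * Lam t ^ 3)).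
Proof.
  intros Hl Hs Ha.
  pose proof (Lam_ge t) as [L2 _]. set (L := Lam t) in *.
  set (SS := sum_n (fun k => sgn k * (RtoC x * ccosh (t * RtoC (1 - muz mu k)) - RtoC y * ccosh (t * RtoC (muz mu k))))%C lam).
  set (c := RtoC ((1 - (-1) ^ lam) / 2)).
  set (Ei := cexp (- t)%C). set (Hi := cexp (- (t / RtoC 2))%C).
  set (ch := ccosh t). set (ch2 := ccosh (t / RtoC 2)).
  set (D := (RtoC 1 - cexp (- (RtoC 2 * t)))%C).
  assert (HD : D <> 0%C) by apply Dneq, Hs.
  assert (Eq : theta g lam x y mu t =
     (RtoC (sqrt 2 * g) / D * (RtoC 4 * Ei * (RtoC x * ch - RtoC y) * c
        - (RtoC x - RtoC y) * (RtoC 2 * Hi * (1 + Ei) * ch2)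
        + RtoC 4 * Ei * sgn lam * SS))%C).
  { unfold theta. fold SS c ch ch2.
    rewrite !(inv_sinh t _ Hs), (coth_half t Hs). fold Ei Hi ch2.
    assert (E1 : RtoC (2 * sqrt 2 * g) = (RtoC 2 * RtoC (sqrt 2 * g))%C) by (rewrite <- RtoC_mult; f_equal; ring).
    assert (E2 : RtoC (sqrt 2 * g * (x - y)) = (RtoC (sqrt 2 * g) * (RtoC x - RtoC y))%C) by (rewrite <- RtoC_minus, <- RtoC_mult; f_equal; ring).
    rewrite E1, E2. fold D. field. exact HD. }
  rewrite Eq, Cmod_mult. apply Rmult_le_compat_l. apply Cmod_ge_0.
  assert (hx := CmodR x). assert (hy := CmodR y).
  assert (h4 : Cmod (RtoC 4) <= 4) by (rewrite Cmod_R, Rabs_pos_eq; lra).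
  assert (h2 : Cmod (RtoC 2) <= 2) by (rewrite Cmod_R, Rabs_pos_eq; lra).
  assert (h1 : Cmod 1%C <= 1) by (rewrite Cmod_1; lra).
  assert (hEi : Cmod Ei <= L) by apply Cmod_Ei.
  assert (hHi : Cmod Hi <= L) by apply Cmod_Hi.
  assert (hch : Cmod ch <= L). { unfold ch. rewrite <- (Cmult_1_r t). apply ccosh_bdL; lra. }
  assert (hch2 : Cmod ch2 <= L). { unfold ch2. rewrite half_eq. apply ccosh_bdL; lra. }
  assert (hsg : Cmod (sgn lam) <= 1) by (rewrite Cmod_sgn; lra).
  assert (hc : Cmod c <= 1).
  { unfold c. rewrite Cmod_R. pose proof (pow_1_abs lam). apply Rabs_le.
    assert (-1 <= (-1)^lam <= 1) by (pose proof (Rle_abs ((-1)^lam)); pose proof (Rle_abs (-((-1)^lam))); rewrite Rabs_Ropp in *; lra). lra. }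
  assert (hS : Cmod SS <= (Rabs x + Rabs y) * L + (Rabs x + Rabs y) * L).
  { unfold SS. eapply Rle_trans.
    apply (alt_bd (fun k => (RtoC x * ccosh (t * RtoC (1 - muz mu k)) - RtoC y * ccosh (t * RtoC (muz mu k)))%C) (muz mu) ((Rabs x + Rabs y) * L) lam).
    - intros k Hk. pose proof (muz_rng lam mu Ha k Hk).
      assert (Cmod (ccosh (t * RtoC (1 - muz mu k))) <= L) by (apply ccosh_bdL; lra).
      assert (Cmod (ccosh (t * RtoC (muz mu k))) <= L) by (apply ccosh_bdL; lra).
      eapply Rle_trans. bnd. pose proof (Rabs_pos x). pose proof (Rabs_pos y). nra.
    - intros k Hk. pose proof (muz_rng lam mu Ha k ltac:(lia)). pose proof (muz_rng lam mu Ha (S k) ltac:(lia)).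
      pose proof (muz_mon lam mu Hl Ha k Hk).
      replace (RtoC x * ccosh (t * RtoC (1 - muz mu (S k))) - RtoC y * ccosh (t * RtoC (muz mu (S k))) -
         (RtoC x * ccosh (t * RtoC (1 - muz mu k)) - RtoC y * ccosh (t * RtoC (muz mu k))))%C
        with (RtoC x * (ccosh (t * RtoC (1 - muz mu (S k))) - ccosh (t * RtoC (1 - muz mu k)))
              - RtoC y * (ccosh (t * RtoC (muz mu (S k))) - ccosh (t * RtoC (muz mu k))))%C by ring.
      pose proof (ccosh_lip t (1 - muz mu (S k)) (1 - muz mu k) ltac:(lra) ltac:(lra)) as P1.
      pose proof (ccosh_lip t (muz mu (S k)) (muz mu k) ltac:(lra) ltac:(lra)) as P2.
      fold L in P1, P2.
      replace (1 - muz mu (S k) - (1 - muz mu k)) with (- (muz mu (S k) - muz mu k)) in P1 by ring.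
      rewrite Rabs_Ropp, Rabs_pos_eq in P1 by lra. rewrite Rabs_pos_eq in P2 by lra.
      eapply Rle_trans. bnd. pose proof (Rabs_pos x). pose proof (Rabs_pos y). nra.
    - apply muz_mon; auto.
    - pose proof (muz_rng lam mu Ha lam ltac:(lia)). change (muz mu 0) with 0.
      pose proof (Rabs_pos x). pose proof (Rabs_pos y). assert (0 <= (Rabs x + Rabs y) * L) by nra. nra. }
  eapply Rle_trans. bnd.
  pose proof (Rabs_pos x). pose proof (Rabs_pos y).
  set (X := Rabs x) in *. set (Y := Rabs y) in *.
  assert (0 <= X * L) by nra. assert (0 <= Y * L) by nra.
  assert (Y * L <= Y * L * L) by nra.
  assert (0 <= (X + Y) * L * L) by nra.
  assert ((X + Y) * L * L * 2 <= (X + Y) * L * L * L) by nra.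
  simpl. nra.
Qed.

Lemma alt_gen (f : R -> C) t lam mu : (1 <= lam)%nat -> admissible lam mu ->
  (forall s, 0 <= s <= 1 -> Cmod (f s) <= Lam t) ->
  (forall s s', 0 <= s <= 1 -> 0 <= s' <= 1 -> Cmod (f s - f s')%C <= Lam t * Rabs (s - s')) ->
  Cmod (sum_n (fun k => sgn k * f (muz mu k))%C lam) <= 2 * Lam t.
Proof.
  intros Hl Ha Hb Hlip. pose proof (Lam_ge t) as [L2 _].
  eapply Rle_trans. apply (alt_bd (fun k => f (muz mu k)) (muz mu) (Lam t) lam).
  - intros k Hk. apply Hb. apply (muz_rng lam mu Ha k Hk).
  - intros k Hk. pose proof (muz_mon lam mu Hl Ha k Hk).
    pose proof (muz_rng lam mu Ha k ltac:(lia)). pose proof (muz_rng lam mu Ha (S k) ltac:(lia)).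
    rewrite <- (Rabs_pos_eq (muz mu (S k) - muz mu k)) by lra. apply Hlip; auto.
  - apply muz_mon; auto.
  - pose proof (muz_rng lam mu Ha lam ltac:(lia)). change (muz mu 0) with 0. nra.
Qed.

Lemma psi_eq_bd g lam mu t (f : R -> C) : (1 <= lam)%nat -> Rstar t -> admissible lam mu ->
  (forall s, 0 <= s <= 1 -> Cmod (f s) <= Lam t) ->
  (forall s s', 0 <= s <= 1 -> 0 <= s' <= 1 -> Cmod (f s - f s')%C <= Lam t * Rabs (s - s')) ->
  Cmod (RtoC (4 * g ^ 2) / csinh t * sum_n (fun k => sgn k * f (muz mu k))%C lam * sum_n (fun k => sgn k * f (muz mu k))%C lam)%C
  <= Cmod (RtoC (2 * g ^ 2) / (RtoC 1 - cexp (- (RtoC 2 * t))))%C * (16 * Lam t ^ 3).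
Proof.
  intros Hl Hs Ha Hb Hlip.
  pose proof (alt_gen f t lam mu Hl Ha Hb Hlip) as hS.
  set (SS := sum_n (fun k => sgn k * f (muz mu k))%C lam) in *.
  pose proof (Lam_ge t) as [L2 _]. set (L := Lam t) in *.
  set (D := (RtoC 1 - cexp (- (RtoC 2 * t)))%C).
  assert (HD : D <> 0%C) by apply Dneq, Hs.
  rewrite (inv_sinh t _ Hs). fold D.
  assert (E1 : RtoC (4 * g ^ 2) = (RtoC 2 * RtoC (2 * g ^ 2))%C) by (rewrite <- RtoC_mult; f_equal; ring).
  rewrite E1.
  replace (RtoC 2 * RtoC (2 * g ^ 2) / D * (RtoC 2 * cexp (- t)) * SS * SS)%C
    with (RtoC (2 * g ^ 2) / D * (RtoC 4 * cexp (- t) * SS * SS))%C by (field; exact HD).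
  rewrite Cmod_mult. apply Rmult_le_compat_l. apply Cmod_ge_0.
  assert (h4 : Cmod (RtoC 4) <= 4) by (rewrite Cmod_R, Rabs_pos_eq; lra).
  assert (hEi : Cmod (cexp (- t)) <= L) by apply Cmod_Ei.
  eapply Rle_trans. bnd. simpl. nra.
Qed.

Lemma psi_plus_bd g lam mu t : (1 <= lam)%nat -> Rstar t -> admissible lam mu ->
  Cmod (psi_plus g lam mu t) <= Cmod (RtoC (2 * g ^ 2) / (RtoC 1 - cexp (- (RtoC 2 * t))))%C * (16 * Lam t ^ 3).
Proof.
  intros Hl Hs Ha. unfold psi_plus.
  apply (psi_eq_bd g lam mu t (fun s => ccosh (t * RtoC (1/2 - s)))); auto.
  - intros s Hs'. apply ccosh_bdL; lra.
  - intros s s' H1 H2. eapply Rle_trans. apply ccosh_lip; lra.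
    replace (1/2 - s - (1/2 - s')) with (- (s - s')) by ring. rewrite Rabs_Ropp. lra.
Qed.

Lemma psi_minus_bd g lam mu t : (1 <= lam)%nat -> Rstar t -> admissible lam mu ->
  Cmod (psi_minus g lam mu t) <= Cmod (RtoC (2 * g ^ 2) / (RtoC 1 - cexp (- (RtoC 2 * t))))%C * (16 * Lam t ^ 3).
Proof.
  intros Hl Hs Ha. unfold psi_minus.
  apply (psi_eq_bd g lam mu t (fun s => csinh (t * RtoC (1/2 - s)))); auto.
  - intros s Hs'. apply csinh_bdL; lra.
  - intros s s' H1 H2. eapply Rle_trans. apply csinh_lip; lra.
    replace (1/2 - s - (1/2 - s')) with (- (s - s')) by ring. rewrite Rabs_Ropp. lra.
Qed.

Lemma xi_bd g lam mu t : (1 <= lam)%nat -> Rstar t -> admissible lam mu ->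
  Cmod (xi g lam mu t) <= Cmod (RtoC (2 * g ^ 2) / (RtoC 1 - cexp (- (RtoC 2 * t))))%C * (24 * Lam t ^ 4) * INR lam.
Proof.
  intros Hl Hs Ha.
  pose proof (Lam_ge t) as [L2 _]. set (L := Lam t) in *.
  set (S1 := sum_n (fun k => sgn k * ccosh (t * RtoC (muz mu k)))%C lam).
  set (S2 := (sum_n (fun b => sum_n (fun a =>
          if (Nat.ltb a b && Nat.odd (b - a))%bool then
            (ccosh (t * RtoC (muz mu (S b) - 1)) - ccosh (t * RtoC (muz mu b - 1)))
            * (ccosh (t * RtoC (muz mu a)) - ccosh (t * RtoC (muz mu (S a))))
          else RtoC 0) (lam - 1)) (lam - 1))%C).
  set (sh := csinh (RtoC (1/2) * t * RtoC (1 - muz mu lam))%C).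
  set (D := (RtoC 1 - cexp (- (RtoC 2 * t)))%C).
  assert (HD : D <> 0%C) by apply Dneq, Hs.
  assert (Eq : xi g lam mu t = (RtoC (2 * g ^ 2) / D *
      (- (RtoC 8 * cexp (- t) * sh * sh * sgn lam * S1) - RtoC 4 * cexp (- t) * S2))%C).
  { unfold xi. fold S1 S2 sh. rewrite !(inv_sinh t _ Hs). fold D.
    assert (E1 : RtoC (4 * g ^ 2) = (RtoC 2 * RtoC (2 * g ^ 2))%C) by (rewrite <- RtoC_mult; f_equal; ring).
    assert (E2 : RtoC (8 * g ^ 2) = (RtoC 4 * RtoC (2 * g ^ 2))%C) by (rewrite <- RtoC_mult; f_equal; ring).
    rewrite E1, E2. field. exact HD. }
  rewrite Eq, Cmod_mult, Rmult_assoc. apply Rmult_le_compat_l. apply Cmod_ge_0.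
  assert (h4 : Cmod (RtoC 4) <= 4) by (rewrite Cmod_R, Rabs_pos_eq; lra).
  assert (h8 : Cmod (RtoC 8) <= 8) by (rewrite Cmod_R, Rabs_pos_eq; lra).
  assert (hEi : Cmod (cexp (- t)) <= L) by apply Cmod_Ei.
  assert (hsg : Cmod (sgn lam) <= 1) by (rewrite Cmod_sgn; lra).
  assert (hsh : Cmod sh <= L).
  { unfold sh. pose proof (muz_rng lam mu Ha lam ltac:(lia)).
    replace (RtoC (1/2) * t * RtoC (1 - muz mu lam))%C with (t * RtoC ((1 - muz mu lam) / 2))%C.
    apply csinh_bdL; lra.
    destruct t. unfold Cmult, RtoC; simpl. f_equal; field. }
  assert (hS1 : Cmod S1 <= 2 * L).
  { apply (alt_gen (fun s => ccosh (t * RtoC s)) t lam mu Hl Ha).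
    - intros s Hs'. apply ccosh_bdL; lra.
    - intros s s' H1 H2. apply ccosh_lip; lra. }
  assert (hS2 : Cmod S2 <= INR lam * (2 * L * L)).
  { unfold S2. eapply Rle_trans.
    apply (sum_tele_bd _ (muz mu) (INR lam * (2 * L * L)) (lam - 1)).
    - intros b Hb. pose proof (muz_mon lam mu Hl Ha b ltac:(lia)).
      pose proof (muz_rng lam mu Ha b ltac:(lia)). pose proof (muz_rng lam mu Ha (S b) ltac:(lia)).
      eapply Rle_trans. apply sum_const_bd with (c := L * (muz mu (S b) - muz mu b) * (2 * L)).
      + intros a Ha'. pose proof (muz_rng lam mu Ha a ltac:(lia)). pose proof (muz_rng lam mu Ha (S a) ltac:(lia)).
        destruct (Nat.ltb a b && Nat.odd (b - a))%bool.
        * apply Cm_mul.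
          -- eapply Rle_trans. apply ccosh_lip; lra.
             replace (muz mu (S b) - 1 - (muz mu b - 1)) with (muz mu (S b) - muz mu b) by ring.
             rewrite Rabs_pos_eq by lra. apply Rle_refl.
          -- eapply Rle_trans. apply Cmod_sub_le.
             pose proof (ccosh_bdL t (muz mu a) ltac:(lra)) as Q0. pose proof (ccosh_bdL t (muz mu (S a)) ltac:(lra)) as Q1. change (Lam t) with L in Q0, Q1. lra.
        * rewrite Cmod_0. assert (0 <= L * (muz mu (S b) - muz mu b)) by nra. nra.
      + replace (S (lam - 1)) with lam by lia. nra.
    - replace (S (lam - 1)) with lam by lia. change (muz mu 0) with 0.
      pose proof (muz_rng lam mu Ha lam ltac:(lia)). pose proof (pos_INR lam).
      assert (0 <= INR lam * (2 * L * L)) by nra. nra. }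
  eapply Rle_trans. bnd.
  assert (1 <= INR lam) by (apply (le_INR 1); lia).
  assert (0 <= L * L * L) by nra.
  assert (L * L * L <= L * L * L * L) by nra.
  simpl. nra.
Qed.

Lemma list_max (l : list nat) : exists N, forall i, In i l -> (i <= N)%nat.
Proof.
  induction l as [|a l [N HN]]. exists 0%nat; intros i [].
  exists (Nat.max a N). intros i [H|H]. subst; lia. specialize (HN i H); lia.
Qed.

Lemma compact_bd (K : C -> Prop) : compactC K ->
  exists N : R, 0 <= N /\ forall t, K t -> Rabs (fst t) <= N /\ Rabs (snd t) <= N.
Proof.
  intro HK.
  destruct (HK nat (fun n z => Rabs (fst z) < INR n /\ Rabs (snd z) < INR n)) as [l Hl].
  - intros n x [H1 H2].
    assert (He : 0 < Rmin (INR n - Rabs (fst x)) (INR n - Rabs (snd x))) by (apply Rmin_glb_lt; lra).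
    exists (mkposreal _ He). intros y Hy. unfold ball in Hy; simpl in Hy. unfold prod_ball in Hy. simpl in Hy.
    unfold ball in Hy; simpl in Hy. unfold AbsRing_ball, abs, minus, plus, opp in Hy; simpl in Hy.
    destruct Hy as [Hy1 Hy2].
    pose proof (Rmin_l (INR n - Rabs (fst x)) (INR n - Rabs (snd x))).
    pose proof (Rmin_r (INR n - Rabs (fst x)) (INR n - Rabs (snd x))).
    pose proof (Rabs_triang_inv (fst y) (fst x)). pose proof (Rabs_triang_inv (snd y) (snd x)).
    unfold Rminus in *. split; lra.
  - intros z _. destruct (INR_unbounded (Rabs (fst z) + Rabs (snd z))) as [n Hn].
    exists n. pose proof (Rabs_pos (fst z)). pose proof (Rabs_pos (snd z)). split; lra.
  - destruct (list_max l) as [N HN]. exists (INR N). split. apply pos_INR.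
    intros t Ht. destruct (Hl t Ht) as [i [Hi [H1 H2]]].
    pose proof (le_INR _ _ (HN i Hi)). split; lra.
Qed.

Theorem mainTheorem8 (g : R) :
  exists (C1 : R -> R -> C -> R) (C2 C3 : C -> R),
    (forall x y t, Rstar t -> 0 <= C1 x y t) /\
    (forall t, Rstar t -> 0 <= C2 t) /\
    (forall t, Rstar t -> 0 <= C3 t) /\
    (forall (K : C -> Prop) (M : R), compactC K -> (forall t, K t -> Rstar t) ->
       exists B : R, forall x y t, Rabs x <= M -> Rabs y <= M -> K t ->
         C1 x y t <= B /\ C2 t <= B /\ C3 t <= B) /\
    (forall (lam : nat) (mu : nat -> R) (x y : R) (t : C),
       (1 <= lam)%nat -> Rstar t -> admissible lam mu ->
       Cmod (theta g lam x y mu t)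
         <= Cmod (RtoC (sqrt 2 * g) / (RtoC 1 - cexp (- (RtoC 2 * t))))%C * C1 x y t /\
       Cmod (psi_plus g lam mu t)
         <= Cmod (RtoC (2 * g ^ 2) / (RtoC 1 - cexp (- (RtoC 2 * t))))%C * C2 t /\
       Cmod (psi_minus g lam mu t)
         <= Cmod (RtoC (2 * g ^ 2) / (RtoC 1 - cexp (- (RtoC 2 * t))))%C * C2 t /\
       Cmod (xi g lam mu t)
         <= Cmod (RtoC (2 * g ^ 2) / (RtoC 1 - cexp (- (RtoC 2 * t))))%C * C3 t * INR lam).
Proof.
  exists (fun x y t => (Rabs x + Rabs y) * (20 * Lam t ^ 3)),
         (fun t => 16 * Lam t ^ 3), (fun t => 24 * Lam t ^ 4).
  assert (Lp : forall t, 0 <= Lam t) by (intro t; pose proof (Lam_ge t); lra).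
  split; [|split; [|split; [|split]]].
  - intros x y t _. pose proof (Rabs_pos x). pose proof (Rabs_pos y). pose proof (pow_le _ 3 (Lp t)). nra.
  - intros t _. pose proof (pow_le _ 3 (Lp t)). lra.
  - intros t _. pose proof (pow_le _ 4 (Lp t)). lra.
  - intros K M HK _. destruct (compact_bd K HK) as [N [HN0 HN]].
    set (LN := 2 * (1 + N + N) * exp N).
    assert (HL : forall t, K t -> Lam t <= LN).
    { intros t Ht. destruct (HN t Ht) as [h1 h2]. unfold Lam, LN.
      pose proof (exp_mono _ _ h1). pose proof (exp_pos (Rabs (fst t))).
      pose proof (Rabs_pos (fst t)). pose proof (Rabs_pos (snd t)).
      apply Rmult_le_compat; lra. }
    assert (LN0 : 0 <= LN) by (pose proof (Lp (0,0)%C); unfold LN; pose proof (exp_pos N); nra).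
    exists (2 * Rabs M * (20 * LN ^ 3) + 16 * LN ^ 3 + 24 * LN ^ 4).
    intros x y t Hx Hy Ht.
    pose proof (HL t Ht). pose proof (Lp t).
    pose proof (pow_incr _ _ 3 (conj (Lp t) (HL t Ht))).
    pose proof (pow_incr _ _ 4 (conj (Lp t) (HL t Ht))).
    pose proof (pow_le _ 3 (Lp t)). pose proof (pow_le _ 4 (Lp t)).
    pose proof (pow_le _ 3 LN0). pose proof (pow_le _ 4 LN0).
    pose proof (Rle_abs M). pose proof (Rabs_pos x). pose proof (Rabs_pos y). pose proof (Rabs_pos M).
    assert ((Rabs x + Rabs y) * (20 * Lam t ^ 3) <= 2 * Rabs M * (20 * LN ^ 3)).
    { apply Rmult_le_compat; nra. }
    repeat split; nra.
  - intros lam mu x y t Hl Hs Ha. repeat split.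
    + apply theta_bd; auto.
    + apply psi_plus_bd; auto.
    + apply psi_minus_bd; auto.
    + apply xi_bd; auto.
Qed.
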